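(* Let $i,j\in\{1,2,3,4\}$ and let $w\in W(\mathrm{F}_4)$ satisfy $w\beta_i=\beta_j$. Then $we_iw^{-1}=e_j$ in $\mathrm{Br}(\mathrm{F}_4)$.
   Context: Let $\delta$ be an indeterminate. $\mathrm{Br}(\mathrm{F}_4)$ is the unital associative $\mathbb Z[\delta^{\pm1}]$-algebra generated by $r_1,r_2,r_3,r_4,e_1,e_2,e_3,e_4$ subject to the relations: $r_i^2=1$ and $r_ie_i=e_ir_i=e_i$ for all $i$; $e_i^2=\delta e_i$ for $i\in\{3,4\}$; $e_i^2=\delta^2e_i$ for $i\in\{1,2\}$; for $\{i,j\}\in\{\{1,3\},\{1,4\},\{2,4\}\}$: $r_ir_j=r_jr_i$, $e_ir_j=r_je_i$, $e_ie_j=e_je_i$; for $(i,j)\in\{(1,2),(2,1),(3,4),(4,3)\}$: $r_ir_jr_i=r_jr_ir_j$, $r_jr_ie_j=e_ie_j$, $r_ie_jr_i=r_je_ir_j$; and $r_2r_3r_2r_3=r_3r_2r_3r_2$, $r_2r_3e_2=r_3e_2$, $r_2e_3r_2e_3=e_3e_2e_3$, $(r_2r_3r_2)e_3=e_3(r_2r_3r_2)$, $e_2r_3e_2=\delta e_2$, $e_2e_3e_2=\delta e_2$, $e_2r_3r_2=e_2r_3$, $e_2e_3r_2=e_2e_3$. Let $\epsilon_1,\dots,\epsilon_4$ be the standard orthonormal basis of $\mathbb R^4$, $\beta_1=\frac12(\epsilon_1-\epsilon_2-\epsilon_3-\epsilon_4)$, $\beta_2=\epsilon_2$, $\beta_3=\epsilon_3-\epsilon_2$,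 $\beta_4=\epsilon_4-\epsilon_3$, simple roots of a root system $\Psi$ of type $\mathrm{F}_4$. $W(\mathrm{F}_4)$ is the group generated by the reflections $s_i=s_{\beta_i}$; since $r_1,\dots,r_4$ satisfy the Coxeter relations of $\mathrm{F}_4$, $s_i\mapsto r_i$ extends to a group homomorphism $W(\mathrm{F}_4)\to\mathrm{Br}(\mathrm{F}_4)^\times$, and elements of $W(\mathrm{F}_4)$ are identified with their images in $\mathrm{Br}(\mathrm{F}_4)$. *)

(* Defs.v *)
From HB Require Import structures.
From mathcomp Require Import all_boot all_order all_algebra.
Set Implicit Arguments. Unset Strict Implicit. Unset Printing Implicit Defensive.
Import Order.TTheory GRing.Theory Num.Theory.
Local Open Scope ring_scope.

Definition vec := 'rV[rat]_4.

(* eps_k, k = 1..4 ; coordinates indexed by 'I_4 = {0,..,3} *)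
Definition mkvec (a b c e : rat) : vec :=
  \row_(k < 4) nth 0 [:: a; b; c; e] k.

(* simple roots beta_1..beta_4 (beta_i for i outside 1..4 is 0, never used) *)
Definition beta (i : nat) : vec :=
  match i with
  | 1 => mkvec (1/2) (-(1/2)) (-(1/2)) (-(1/2))
  | 2 => mkvec 0 1 0 0
  | 3 => mkvec 0 (-1) 1 0
  | 4 => mkvec 0 0 (-1) 1
  | _ => 0%R
  end.

Definition dot (x y : vec) : rat := (x *m y^T) 0 0.

Definition refl (b x : vec) : vec := x - ((2 * dot x b) / dot b b) *: b.

(* A word u = [:: k1; ...; km] represents w = s_{k1} ... s_{km} in W(F4);
   its action on a vector: w x = s_{k1} (s_{k2} (... (s_{km} x))). *)
Definition wact (u : seq nat) (x : vec) : vec :=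
  foldr (fun k y => refl (beta k) y) x u.

Definition valid_word (u : seq nat) : bool := all (fun k => (0 < k <= 4)%N) u.

Definition wimg (R : pzRingType) (r : nat -> R) (u : seq nat) : R :=
  \prod_(k <- u) r k.

(* ---------- Defining relations of Br(F4) ----------
   A Z[delta^{+-1}]-algebra is a ring R together with a central unit d
   (the image of delta).  [BrF4_rel d r e] says that r_1..r_4, e_1..e_4 in R
   satisfy the defining relations of Br(F4). *)
Record BrF4_rel (R : pzRingType) (d : R) (r e : nat -> R) : Prop := {
  d_central : forall x : R, d * x = x * d;
  d_unit : exists d' : R, d * d' = 1 /\ d' * d = 1;
  r_sq : forall i, (0 < i <= 4)%N -> r i * r i = 1;
  re_l : forall i, (0 < i <= 4)%N -> r i * e i = e i;
  re_r : forall i, (0 < i <= 4)%N -> e i * r i = e i;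
  e_sq34 : forall i, (i == 3)%N || (i == 4)%N -> e i * e i = d * e i;
  e_sq12 : forall i, (i == 1)%N || (i == 2)%N -> e i * e i = d ^+ 2 * e i;
  comm_rel : forall i j,
    (i, j) \in [:: (1,3); (3,1); (1,4); (4,1); (2,4); (4,2)]%N ->
    [/\ r i * r j = r j * r i, e i * r j = r j * e i & e i * e j = e j * e i];
  braid_rel : forall i j,
    (i, j) \in [:: (1,2); (2,1); (3,4); (4,3)]%N ->
    [/\ r i * r j * r i = r j * r i * r j,
        r j * r i * e j = e i * e j &
        r i * e j * r i = r j * e i * r j];
  rel23_1 : r 2 * r 3 * r 2 * r 3 = r 3 * r 2 * r 3 * r 2;
  rel23_2 : r 2 * r 3 * e 2 = r 3 * e 2;
  rel23_3 : r 2 * e 3 * r 2 * e 3 = e 3 * e 2 * e 3;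
  rel23_4 : (r 2 * r 3 * r 2) * e 3 = e 3 * (r 2 * r 3 * r 2);
  rel23_5 : e 2 * r 3 * e 2 = d * e 2;
  rel23_6 : e 2 * e 3 * e 2 = d * e 2;
  rel23_7 : e 2 * r 3 * r 2 = e 2 * r 3;
  rel23_8 : e 2 * e 3 * r 2 = e 2 * e 3
}.

(* Main.v *)
Require Import Defs.
From HB Require Import structures.
From mathcomp Require Import all_boot all_order all_algebra.
From mathcomp Require Import ring.
Import GRing.Theory.
Local Open Scope ring_scope.

Definition qv := (rat * rat * rat * rat)%type.
Definition rules : seq (seq nat * seq nat) := [:: ([:: 1; 1], [::]);
  ([:: 2; 2], [::]);
  ([:: 3; 3], [::]);
  ([:: 4; 4], [::]);
  ([:: 1; 5], [:: 5]);
  ([:: 5; 1], [:: 5]);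
  ([:: 2; 6], [:: 6]);
  ([:: 6; 2], [:: 6]);
  ([:: 3; 7], [:: 7]);
  ([:: 7; 3], [:: 7]);
  ([:: 4; 8], [:: 8]);
  ([:: 8; 4], [:: 8]);
  ([:: 1; 3], [:: 3; 1]);
  ([:: 5; 3], [:: 3; 5]);
  ([:: 3; 1], [:: 1; 3]);
  ([:: 7; 1], [:: 1; 7]);
  ([:: 1; 4], [:: 4; 1]);
  ([:: 5; 4], [:: 4; 5]);
  ([:: 4; 1], [:: 1; 4]);
  ([:: 8; 1], [:: 1; 8]);
  ([:: 2; 4], [:: 4; 2]);
  ([:: 6; 4], [:: 4; 6]);
  ([:: 4; 2], [:: 2; 4]);
  ([:: 8; 2], [:: 2; 8]);
  ([:: 1; 2; 1], [:: 2; 1; 2]);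
  ([:: 1; 6; 1], [:: 2; 5; 2]);
  ([:: 2; 1; 2], [:: 1; 2; 1]);
  ([:: 2; 5; 2], [:: 1; 6; 1]);
  ([:: 3; 4; 3], [:: 4; 3; 4]);
  ([:: 3; 8; 3], [:: 4; 7; 4]);
  ([:: 4; 3; 4], [:: 3; 4; 3]);
  ([:: 4; 7; 4], [:: 3; 8; 3]);
  ([:: 2; 3; 2; 3], [:: 3; 2; 3; 2]);
  ([:: 2; 3; 6], [:: 3; 6]);
  ([:: 2; 3; 2; 7], [:: 7; 2; 3; 2]);
  ([:: 6; 3; 2], [:: 6; 3])].

Definition roots : seq qv := [:: ((-1), (-1), 0, 0);
  ((-1), 0, (-1), 0);
  ((-1), 0, 0, (-1));
  ((-1), 0, 0, 0);
  ((-1), 0, 0, 1);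
  ((-1), 0, 1, 0);
  ((-1), 1, 0, 0);
  ((-(1/2)), (-(1/2)), (-(1/2)), (-(1/2)));
  ((-(1/2)), (-(1/2)), (-(1/2)), (1/2));
  ((-(1/2)), (-(1/2)), (1/2), (-(1/2)));
  ((-(1/2)), (-(1/2)), (1/2), (1/2));
  ((-(1/2)), (1/2), (-(1/2)), (-(1/2)));
  ((-(1/2)), (1/2), (-(1/2)), (1/2));
  ((-(1/2)), (1/2), (1/2), (-(1/2)));
  ((-(1/2)), (1/2), (1/2), (1/2));
  (0, (-1), (-1), 0);
  (0, (-1), 0, (-1));
  (0, (-1), 0, 0);
  (0, (-1), 0, 1);
  (0, (-1), 1, 0);
  (0, 0, (-1), (-1));
  (0, 0, (-1), 0);
  (0, 0, (-1), 1);
  (0, 0, 0, (-1));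
  (0, 0, 0, 1);
  (0, 0, 1, (-1));
  (0, 0, 1, 0);
  (0, 0, 1, 1);
  (0, 1, (-1), 0);
  (0, 1, 0, (-1));
  (0, 1, 0, 0);
  (0, 1, 0, 1);
  (0, 1, 1, 0);
  ((1/2), (-(1/2)), (-(1/2)), (-(1/2)));
  ((1/2), (-(1/2)), (-(1/2)), (1/2));
  ((1/2), (-(1/2)), (1/2), (-(1/2)));
  ((1/2), (-(1/2)), (1/2), (1/2));
  ((1/2), (1/2), (-(1/2)), (-(1/2)));
  ((1/2), (1/2), (-(1/2)), (1/2));
  ((1/2), (1/2), (1/2), (-(1/2)));
  ((1/2), (1/2), (1/2), (1/2));
  (1, (-1), 0, 0);
  (1, 0, (-1), 0);
  (1, 0, 0, (-1));
  (1, 0, 0, 0);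
  (1, 0, 0, 1);
  (1, 0, 1, 0);
  (1, 1, 0, 0)].

Definition tab : seq (seq nat * nat) := [:: ([:: 2; 3; 4; 1; 2; 3], 3);
  ([:: 3; 2; 3; 4; 1; 2; 3], 3);
  ([:: 4; 3; 2; 3; 4; 1; 2; 3], 3);
  ([:: 1; 2; 3; 4; 2; 3; 2; 1], 1);
  ([:: 1; 2; 3], 3);
  ([:: 4; 1; 2; 3], 3);
  ([:: 3; 4; 1; 2; 3], 3);
  ([:: 2; 3; 4; 2; 3; 2; 1], 1);
  ([:: 2; 3; 2; 1], 1);
  ([:: 4; 2; 3; 2; 1], 1);
  ([:: 2; 1], 1);
  ([:: 3; 4; 2; 3; 2; 1], 1);
  ([:: 3; 2; 1], 1);
  ([:: 4; 3; 2; 1], 1);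
  ([:: 1], 1);
  ([:: 2; 3], 3);
  ([:: 4; 2; 3], 3);
  ([:: 2], 2);
  ([:: 4], 3);
  ([::], 3);
  ([:: 3; 4; 2; 3], 3);
  ([:: 3; 2], 2);
  ([::], 4);
  ([:: 4; 3; 2], 2);
  ([:: 4; 3], 2);
  ([:: 4], 4);
  ([:: 3], 2);
  ([:: 3; 4; 2], 3);
  ([:: 3], 3);
  ([:: 4; 3], 3);
  ([::], 2);
  ([:: 4; 2], 3);
  ([:: 2], 3);
  ([::], 1);
  ([:: 4; 3; 2], 1);
  ([:: 3; 2], 1);
  ([:: 3; 4; 2; 3; 2], 1);
  ([:: 2], 1);
  ([:: 4; 2; 3; 2], 1);
  ([:: 2; 3; 2], 1);
  ([:: 2; 3; 4; 2; 3; 2], 1);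
  ([:: 3; 4; 1; 2], 3);
  ([:: 4; 1; 2], 3);
  ([:: 1; 2], 3);
  ([:: 1; 2; 3; 4; 2; 3; 2], 1);
  ([:: 4; 3; 2; 3; 4; 1; 2], 3);
  ([:: 3; 2; 3; 4; 1; 2], 3);
  ([:: 2; 3; 4; 1; 2], 3)].

Definition certs : seq (seq (seq (nat * nat * bool))) := [:: [:: [:: (7, 3, true); (10, 3, true); (8, 29, true); (9, 1, true); (10, 23, true); (10, 2, true); (13, 2, true); (11, 29, false); (3, 16, true); (20, 16, false); (4, 20, true); (19, 20, false); (5, 28, true); (17, 28, true); (2, 12, true); (21, 12, false); (0, 24, false); (22, 24, false); (2, 32, false); (19, 32, true); (1, 12, false); (22, 12, true); (5, 20, false); (18, 20, true); (7, 2, false); (14, 2, false); (6, 1, false); (11, 1, false); (4, 28, false); (10, 28, false); (3, 20, false); (12, 20, true); (2, 16, false); (13, 16, true); (6, 3, false); (7, 3, false)]; [:: (0, 1, false); (11, 1, false)]; [::]; [:: (7, 1, true); (8, 2, true); (9, 1, true); (10, 34, false); (0, 20, true); (19, 20, false); (1, 28, true); (17, 28, true); (3, 12, true); (16, 12, false); (4, 32, true); (13, 32, false); (7, 2, false); (10, 2, false); (6, 1, false); (7, 1, false)]];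
  [:: [:: (8, 3, true); (11, 3, true); (9, 29, true); (10, 1, true); (11, 23, true); (11, 2, true); (14, 2, true); (12, 29, false); (0, 12, false); (25, 12, true); (4, 16, true); (21, 16, false); (5, 20, true); (20, 20, false); (6, 28, true); (18, 28, true); (3, 12, true); (22, 12, false); (1, 24, false); (23, 24, false); (3, 32, false); (20, 32, true); (2, 12, false); (23, 12, true); (6, 20, false); (19, 20, true); (8, 2, false); (15, 2, false); (7, 1, false); (12, 1, false); (5, 28, false); (11, 28, false); (4, 20, false); (13, 20, true); (3, 16, false); (14, 16, true); (7, 3, false); (8, 3, false)]; [:: (8, 0, true); (9, 15, true); (0, 32, false); (15, 32, true); (3, 20, false); (14, 20, true); (4, 24, true); (12, 24, true); (6, 12, false); (11, 12, true); (7, 0, false); (8, 0, false)]; [:: (0, 2, false); (13, 2, false)]; [::]];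
  [:: [:: (9, 3, true); (12, 3, true); (10, 29, true); (11, 1, true); (12, 23, true); (12, 2, true); (15, 2, true); (13, 29, false); (0, 16, false); (27, 16, true); (1, 12, false); (26, 12, true); (5, 16, true); (22, 16, false); (6, 20, true); (21, 20, false); (7, 28, true); (19, 28, true); (4, 12, true); (23, 12, false); (2, 24, false); (24, 24, false); (4, 32, false); (21, 32, true); (3, 12, false); (24, 12, true); (7, 20, false); (20, 20, true); (9, 2, false); (16, 2, false); (8, 1, false); (13, 1, false); (6, 28, false); (12, 28, false); (5, 20, false); (14, 20, true); (4, 16, false); (15, 16, true); (8, 3, false); (9, 3, false)]; [:: (9, 0, true); (10, 15, true); (0, 20, false); (19, 20, true); (1, 32, false); (16, 32, true); (4, 20, false); (15, 20, true); (5, 24, true); (13, 24, true); (7, 12, false); (12, 12, true); (8, 0, false); (9, 0, false)]; [:: (9, 1, true); (10, 2, true); (11, 1, true); (12, 34, false); (0, 28, false); (22, 28, false); (2, 20, true); (21, 20, false); (3, 28, true); (19, 28, true); (5, 12, true); (18, 12, false); (6, 32, true); (15, 32, false); (9, 2, false); (12, 2, false); (8, 1, false); (9, 1, false)]; [:: (0, 3, false); (15, 3, false)]];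
  [:: [:: (0, 0, false); (15, 0, false)]; [:: (9, 1, true); (12, 1, true); (10, 25, true); (11, 2, true); (12, 33, true); (15, 2, true); (14, 35, true); (14, 0, true); (17, 0, true); (15, 25, false); (0, 24, true); (30, 24, true); (2, 12, false); (29, 12, true); (3, 16, false); (28, 16, true); (7, 24, true); (23, 24, true); (9, 0, false); (20, 0, false); (6, 12, true); (21, 12, false); (4, 24, false); (22, 24, false); (6, 32, false); (19, 32, true); (5, 12, false); (22, 12, true); (9, 1, false); (16, 1, false); (8, 2, false); (13, 2, false); (6, 24, false); (12, 24, false); (8, 1, false); (9, 1, false)]; [:: (9, 3, true); (10, 17, true); (4, 20, true); (15, 20, false); (0, 12, true); (19, 12, false); (1, 32, true); (16, 32, false); (4, 28, false); (14, 28, false); (3, 20, false); (16, 20, true); (6, 20, true); (13, 20, false); (7, 16, true); (12, 16, false); (8, 3, false); (9, 3, false)]; [:: (9, 2, true); (10, 13, true); (0, 16, true); (19, 16, false); (1, 20, true); (18, 20, false); (2, 28, true); (16, 28, true); (4, 32, true); (13, 32, false); (7, 12, true); (12, 12, false); (8, 2, false); (9, 2, false)]];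
  [:: [:: (0, 0, false); (5, 0, false)]; [:: (4, 0, true); (5, 15, true); (0, 24, true); (8, 24, true); (2, 12, false); (7, 12, true); (3, 0, false); (4, 0, false)]; [:: (4, 1, true); (5, 2, true); (6, 1, true); (7, 34, false); (0, 12, true); (13, 12, false); (1, 32, true); (10, 32, false); (4, 2, false); (7, 2, false); (3, 1, false); (4, 1, false)]; [::]];
  [:: [:: (0, 16, false); (9, 16, true); (1, 0, false); (6, 0, false)]; [:: (5, 0, true); (6, 15, true); (0, 20, false); (11, 20, true); (1, 24, true); (9, 24, true); (3, 12, false); (8, 12, true); (4, 0, false); (5, 0, false)]; [::]; [:: (0, 3, false); (7, 3, false)]];
  [:: [:: (0, 12, false); (11, 12, true); (1, 16, false); (10, 16, true); (2, 0, false); (7, 0, false)]; [::]; [:: (0, 2, false); (9, 2, false)]; [:: (6, 1, true); (7, 2, true); (8, 1, true); (9, 34, false); (0, 28, true); (16, 28, true); (2, 12, true); (15, 12, false); (3, 32, true); (12, 32, false); (6, 2, false); (9, 2, false); (5, 1, false); (6, 1, false)]];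
  [:: [::]; [:: (0, 1, false); (13, 1, false)]; [:: (8, 3, true); (9, 17, true); (3, 20, true); (14, 20, false); (0, 32, true); (15, 32, false); (3, 28, false); (13, 28, false); (2, 20, false); (15, 20, true); (5, 20, true); (12, 20, false); (6, 16, true); (11, 16, false); (7, 3, false); (8, 3, false)]; [:: (8, 2, true); (9, 13, true); (0, 20, true); (17, 20, false); (1, 28, true); (15, 28, true); (3, 32, true); (12, 32, false); (6, 12, true); (11, 12, false); (7, 2, false); (8, 2, false)]];
  [:: [:: (5, 1, true); (8, 1, true); (6, 25, true); (7, 2, true); (8, 33, true); (11, 2, true); (10, 35, true); (10, 0, true); (13, 0, true); (11, 25, false); (3, 24, true); (19, 24, true); (5, 0, false); (16, 0, false); (2, 12, true); (17, 12, false); (0, 24, false); (18, 24, false); (2, 32, false); (15, 32, true); (1, 12, false); (18, 12, true); (5, 1, false); (12, 1, false); (4, 2, false); (9, 2, false); (2, 24, false); (8, 24, false); (4, 1, false); (5, 1, false)]; [:: (0, 1, false); (7, 1, false)]; [:: (5, 2, true); (6, 13, true); (0, 32, true); (9, 32, false); (3, 12, true); (8, 12, false); (4, 2, false); (5, 2, false)]; [::]];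
  [:: [:: (6, 1, true); (9, 1, true); (7, 25, true); (8, 2, true); (9, 33, true); (12, 2, true); (11, 35, true); (11, 0, true); (14, 0, true); (12, 25, false); (0, 16, false); (25, 16, true); (4, 24, true); (20, 24, true); (6, 0, false); (17, 0, false); (3, 12, true); (18, 12, false); (1, 24, false); (19, 24, false); (3, 32, false); (16, 32, true); (2, 12, false); (19, 12, true); (6, 1, false); (13, 1, false); (5, 2, false); (10, 2, false); (3, 24, false); (9, 24, false); (5, 1, false); (6, 1, false)]; [:: (0, 20, false); (11, 20, true); (1, 1, false); (8, 1, false)]; [::]; [:: (0, 3, false); (9, 3, false)]];
  [:: [:: (3, 1, true); (6, 1, true); (4, 25, true); (0, 24, false); (8, 24, false); (2, 1, false); (5, 1, false); (1, 0, false); (2, 0, false)]; [:: (0, 1, false); (3, 1, false)]; [::]; [:: (3, 3, true); (4, 17, true); (0, 20, true); (7, 20, false); (1, 16, true); (6, 16, false); (2, 3, false); (3, 3, false)]];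
  [:: [:: (7, 1, true); (10, 1, true); (8, 25, true); (9, 2, true); (10, 33, true); (13, 2, true); (12, 35, true); (12, 0, true); (15, 0, true); (13, 25, false); (0, 12, false); (27, 12, true); (1, 16, false); (26, 16, true); (5, 24, true); (21, 24, true); (7, 0, false); (18, 0, false); (4, 12, true); (19, 12, false); (2, 24, false); (20, 24, false); (4, 32, false); (17, 32, true); (3, 12, false); (20, 12, true); (7, 1, false); (14, 1, false); (6, 2, false); (11, 2, false); (4, 24, false); (10, 24, false); (6, 1, false); (7, 1, false)]; [::]; [:: (0, 2, false); (11, 2, false)]; [:: (7, 2, true); (8, 13, true); (0, 28, true); (14, 28, true); (2, 32, true); (11, 32, false); (5, 12, true); (10, 12, false); (6, 2, false); (7, 2, false)]];
  [:: [:: (4, 1, true); (7, 1, true); (5, 25, true); (0, 12, false); (11, 12, true); (1, 24, false); (9, 24, false); (3, 1, false); (6, 1, false); (2, 0, false); (3, 0, false)]; [::]; [:: (0, 2, false); (5, 2, false)]; [::]];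
  [:: [:: (5, 1, true); (8, 1, true); (6, 25, true); (0, 16, false); (13, 16, true); (1, 12, false); (12, 12, true); (2, 24, false); (10, 24, false); (4, 1, false); (7, 1, false); (3, 0, false); (4, 0, false)]; [:: (0, 20, false); (9, 20, true)]; [:: (5, 3, true); (6, 17, true); (0, 28, false); (10, 28, false); (2, 20, true); (9, 20, false); (3, 16, true); (8, 16, false); (4, 3, false); (5, 3, false)]; [:: (0, 3, false); (7, 3, false)]];
  [:: [:: (0, 0, false); (1, 0, false)]; [::]; [:: (2, 2, true); (3, 13, true); (0, 12, true); (5, 12, false); (1, 2, false); (2, 2, false)]; [:: (2, 3, true); (3, 17, true); (0, 16, true); (5, 16, false); (1, 3, false); (2, 3, false)]];
  [:: [::]; [:: (0, 1, false); (3, 1, false)]; [:: (3, 1, true); (4, 2, true); (5, 1, true); (6, 34, false); (0, 32, true); (9, 32, false); (3, 2, false); (6, 2, false); (2, 1, false); (3, 1, false)]; [::]];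
  [:: [:: (0, 16, false); (7, 16, true)]; [:: (0, 20, false); (7, 20, true); (1, 1, false); (4, 1, false)]; [::]; [:: (0, 3, false); (5, 3, false)]];
  [:: [:: (2, 0, true); (5, 0, true); (3, 25, false); (0, 24, false); (6, 24, false); (2, 1, false); (3, 1, false)]; [:: (0, 1, false); (1, 1, false)]; [::]; [:: (2, 3, true); (3, 21, true); (0, 20, true); (5, 20, false); (1, 3, false); (2, 3, false)]];
  [:: [:: (2, 0, true); (3, 15, true); (0, 16, false); (5, 16, true); (1, 0, false); (2, 0, false)]; [:: (0, 20, false); (3, 20, true)]; [:: (2, 3, true); (5, 3, true); (3, 29, true); (1, 3, false); (4, 3, false); (0, 2, false); (1, 2, false)]; [:: (0, 3, false); (1, 3, false)]];
  [:: [:: (1, 0, true); (2, 15, true); (0, 0, false); (1, 0, false)]; [::]; [::]; [::]];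
  [:: [:: (0, 12, false); (9, 12, true); (1, 16, false); (8, 16, true)]; [:: (5, 3, true); (8, 3, true); (6, 29, true); (7, 1, true); (8, 23, true); (8, 2, true); (11, 2, true); (9, 29, false); (2, 20, true); (17, 20, false); (3, 28, true); (15, 28, true); (0, 32, false); (17, 32, true); (3, 20, false); (16, 20, true); (5, 2, false); (12, 2, false); (4, 1, false); (9, 1, false); (2, 28, false); (8, 28, false); (1, 20, false); (10, 20, true); (4, 3, false); (5, 3, false)]; [:: (0, 2, false); (7, 2, false)]; [:: (5, 1, true); (6, 2, true); (7, 1, true); (8, 34, false); (0, 28, true); (14, 28, true); (2, 32, true); (11, 32, false); (5, 2, false); (8, 2, false); (4, 1, false); (5, 1, false)]];
  [:: [:: (3, 0, true); (6, 0, true); (4, 25, false); (0, 12, false); (9, 12, true); (1, 24, false); (7, 24, false); (3, 1, false); (4, 1, false)]; [:: (3, 2, true); (4, 33, true); (7, 2, true); (6, 35, true); (0, 32, false); (9, 32, true); (3, 1, false); (6, 1, false); (2, 2, false); (3, 2, false)]; [:: (0, 2, false); (3, 2, false)]; [::]];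
  [:: [:: (1, 0, true); (2, 19, true); (0, 0, false); (1, 0, false)]; [:: (1, 1, true); (2, 23, true); (0, 1, false); (1, 1, false)]; [:: (1, 2, true); (4, 2, true); (2, 29, false); (0, 2, false); (3, 2, false)]; [::]];
  [:: [:: (4, 0, true); (7, 0, true); (5, 25, false); (0, 16, false); (11, 16, true); (1, 12, false); (10, 12, true); (2, 24, false); (8, 24, false); (4, 1, false); (5, 1, false)]; [:: (4, 2, true); (5, 33, true); (8, 2, true); (7, 35, true); (0, 20, false); (13, 20, true); (1, 32, false); (10, 32, true); (4, 1, false); (7, 1, false); (3, 2, false); (4, 2, false)]; [:: (4, 3, true); (5, 21, true); (0, 28, false); (8, 28, false); (2, 20, true); (7, 20, false); (3, 3, false); (4, 3, false)]; [:: (0, 3, false); (5, 3, false)]];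
  [:: [:: (3, 0, true); (6, 0, true); (4, 25, false); (0, 16, false); (9, 16, true); (1, 12, false); (8, 12, true); (2, 0, false); (5, 0, false)]; [:: (3, 2, true); (4, 33, true); (7, 2, true); (6, 35, true); (0, 20, false); (11, 20, true); (2, 2, false); (7, 2, false); (1, 1, false); (4, 1, false)]; [:: (3, 3, true); (4, 21, true); (0, 28, false); (6, 28, false); (2, 3, false); (3, 3, false)]; [:: (0, 3, false); (3, 3, false)]];
  [:: [:: (2, 0, true); (3, 19, true); (0, 16, false); (5, 16, true); (1, 0, false); (2, 0, false)]; [:: (2, 1, true); (3, 23, true); (0, 20, false); (5, 20, true); (1, 1, false); (2, 1, false)]; [:: (2, 2, true); (5, 2, true); (3, 29, false); (0, 28, false); (6, 28, false); (2, 3, false); (3, 3, false)]; [:: (0, 3, false); (1, 3, false)]];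
  [:: [:: (2, 0, true); (5, 0, true); (3, 25, false); (0, 12, false); (7, 12, true); (1, 0, false); (4, 0, false)]; [:: (2, 2, true); (3, 33, true); (6, 2, true); (5, 35, true); (1, 2, false); (6, 2, false); (0, 1, false); (3, 1, false)]; [:: (0, 2, false); (1, 2, false)]; [::]];
  [:: [:: (0, 12, false); (7, 12, true); (1, 16, false); (6, 16, true)]; [:: (4, 3, true); (7, 3, true); (5, 29, true); (6, 1, true); (7, 23, true); (7, 2, true); (10, 2, true); (8, 29, false); (2, 20, true); (15, 20, false); (3, 3, false); (12, 3, false); (0, 32, false); (11, 32, true); (3, 1, false); (8, 1, false); (2, 2, false); (5, 2, false); (1, 20, false); (4, 20, true)]; [:: (0, 2, false); (5, 2, false)]; [:: (4, 1, true); (5, 2, true); (6, 1, true); (7, 34, false); (0, 28, true); (12, 28, true); (3, 1, false); (8, 1, false); (2, 2, false); (5, 2, false)]];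
  [:: [:: (2, 0, true); (3, 15, true); (0, 12, false); (5, 12, true); (1, 0, false); (2, 0, false)]; [::]; [:: (0, 2, false); (1, 2, false)]; [::]];
  [:: [:: (3, 0, true); (4, 15, true); (0, 16, false); (7, 16, true); (1, 12, false); (6, 12, true); (2, 0, false); (3, 0, false)]; [:: (0, 20, false); (5, 20, true)]; [:: (3, 3, true); (6, 3, true); (4, 29, true); (0, 28, false); (8, 28, false); (2, 3, false); (5, 3, false); (1, 2, false); (2, 2, false)]; [:: (0, 3, false); (3, 3, false)]];
  [:: [:: (1, 0, true); (4, 0, true); (2, 25, false); (0, 0, false); (3, 0, false)]; [::]; [::]; [:: (1, 3, true); (2, 21, true); (0, 3, false); (1, 3, false)]];
  [:: [:: (0, 16, false); (5, 16, true)]; [:: (0, 20, false); (5, 20, true); (1, 1, false); (2, 1, false)]; [::]; [:: (0, 3, false); (3, 3, false)]];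
  [:: [::]; [:: (0, 1, false); (1, 1, false)]; [:: (2, 1, true); (3, 2, true); (4, 1, true); (5, 34, false); (1, 1, false); (6, 1, false); (0, 2, false); (3, 2, false)]; [::]];
  [:: [::]; [::]; [:: (1, 2, true); (2, 13, true); (0, 2, false); (1, 2, false)]; [:: (1, 3, true); (2, 17, true); (0, 3, false); (1, 3, false)]];
  [:: [:: (4, 1, true); (7, 1, true); (5, 25, true); (0, 16, false); (11, 16, true); (1, 12, false); (10, 12, true); (3, 1, false); (6, 1, false); (2, 0, false); (3, 0, false)]; [:: (0, 20, false); (7, 20, true)]; [:: (4, 3, true); (5, 17, true); (0, 28, false); (8, 28, false); (2, 20, true); (7, 20, false); (3, 3, false); (4, 3, false)]; [:: (0, 3, false); (5, 3, false)]];
  [:: [:: (3, 1, true); (6, 1, true); (4, 25, true); (0, 12, false); (9, 12, true); (2, 1, false); (5, 1, false); (1, 0, false); (2, 0, false)]; [::]; [:: (0, 2, false); (3, 2, false)]; [::]];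
  [:: [:: (6, 1, true); (9, 1, true); (7, 25, true); (8, 2, true); (9, 33, true); (12, 2, true); (11, 35, true); (11, 0, true); (14, 0, true); (12, 25, false); (0, 12, false); (25, 12, true); (1, 16, false); (24, 16, true); (5, 1, false); (18, 1, false); (4, 12, true); (17, 12, false); (5, 2, false); (14, 2, false); (2, 24, false); (14, 24, false); (4, 1, false); (11, 1, false); (3, 12, false); (10, 12, true); (4, 0, false); (7, 0, false)]; [::]; [:: (0, 2, false); (9, 2, false)]; [:: (6, 2, true); (7, 13, true); (0, 28, true); (12, 28, true); (2, 32, true); (9, 32, false); (5, 2, false); (6, 2, false)]];
  [:: [:: (2, 1, true); (5, 1, true); (3, 25, true); (1, 1, false); (4, 1, false); (0, 0, false); (1, 0, false)]; [:: (0, 1, false); (1, 1, false)]; [::]; [:: (2, 3, true); (3, 17, true); (0, 20, true); (5, 20, false); (1, 3, false); (2, 3, false)]];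
  [:: [:: (5, 1, true); (8, 1, true); (6, 25, true); (7, 2, true); (8, 33, true); (11, 2, true); (10, 35, true); (10, 0, true); (13, 0, true); (11, 25, false); (0, 16, false); (23, 16, true); (4, 1, false); (17, 1, false); (3, 12, true); (16, 12, false); (4, 2, false); (13, 2, false); (1, 24, false); (13, 24, false); (3, 1, false); (10, 1, false); (2, 12, false); (9, 12, true); (3, 0, false); (6, 0, false)]; [:: (0, 20, false); (9, 20, true); (1, 1, false); (6, 1, false)]; [::]; [:: (0, 3, false); (7, 3, false)]];
  [:: [:: (4, 1, true); (7, 1, true); (5, 25, true); (6, 2, true); (7, 33, true); (10, 2, true); (9, 35, true); (9, 0, true); (12, 0, true); (10, 25, false); (3, 1, false); (16, 1, false); (2, 12, true); (15, 12, false); (3, 2, false); (12, 2, false); (0, 24, false); (12, 24, false); (2, 1, false); (9, 1, false); (1, 12, false); (8, 12, true); (2, 0, false); (5, 0, false)]; [:: (0, 1, false); (5, 1, false)]; [:: (4, 2, true); (5, 13, true); (0, 32, true); (7, 32, false); (3, 2, false); (4, 2, false)]; [::]];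
  [:: [::]; [:: (0, 1, false); (11, 1, false)]; [:: (7, 3, true); (8, 17, true); (3, 20, true); (12, 20, false); (0, 32, true); (13, 32, false); (3, 28, false); (11, 28, false); (2, 20, false); (13, 20, true); (5, 20, true); (10, 20, false); (6, 3, false); (7, 3, false)]; [:: (7, 2, true); (8, 13, true); (0, 20, true); (15, 20, false); (1, 28, true); (13, 28, true); (3, 32, true); (10, 32, false); (6, 2, false); (7, 2, false)]];
  [:: [:: (0, 12, false); (9, 12, true); (1, 16, false); (8, 16, true); (2, 0, false); (5, 0, false)]; [::]; [:: (0, 2, false); (7, 2, false)]; [:: (5, 1, true); (6, 2, true); (7, 1, true); (8, 34, false); (0, 28, true); (14, 28, true); (4, 1, false); (9, 1, false); (2, 12, true); (9, 12, false); (3, 2, false); (6, 2, false)]];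
  [:: [:: (0, 16, false); (7, 16, true); (1, 0, false); (4, 0, false)]; [:: (4, 0, true); (5, 15, true); (0, 20, false); (9, 20, true); (1, 24, true); (7, 24, true); (3, 0, false); (4, 0, false)]; [::]; [:: (0, 3, false); (5, 3, false)]];
  [:: [:: (0, 0, false); (3, 0, false)]; [:: (3, 0, true); (4, 15, true); (0, 24, true); (6, 24, true); (2, 0, false); (3, 0, false)]; [:: (3, 1, true); (4, 2, true); (5, 1, true); (6, 34, false); (2, 1, false); (7, 1, false); (0, 12, true); (7, 12, false); (1, 2, false); (4, 2, false)]; [::]];
  [:: [:: (0, 0, false); (13, 0, false)]; [:: (8, 1, true); (11, 1, true); (9, 25, true); (10, 2, true); (11, 33, true); (14, 2, true); (13, 35, true); (13, 0, true); (16, 0, true); (14, 25, false); (0, 24, true); (28, 24, true); (2, 12, false); (27, 12, true); (3, 16, false); (26, 16, true); (7, 1, false); (20, 1, false); (6, 12, true); (19, 12, false); (7, 2, false); (16, 2, false); (4, 24, false); (16, 24, false); (6, 1, false); (13, 1, false); (5, 12, false); (12, 12, true); (6, 0, false); (9, 0, false)]; [:: (8, 3, true); (9, 17, true); (4, 20, true); (13, 20, false); (0, 12, true); (17, 12, false); (1, 32, true); (14, 32, false); (4, 28, false); (12, 28, false); (3, 20, false); (14, 20, true); (6, 20, true); (11, 20, false); (7, 3, false); (8, 3, false)]; [:: (8, 2, true); (9, 13, true); (0, 16, true); (17, 16, false); (1, 20, true); (16, 20, false); (2, 28, true); (14, 28, true); (4, 32, true); (11, 32, false); (7, 2, false); (8,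 2, false)]];
  [:: [:: (8, 3, true); (11, 3, true); (9, 29, true); (10, 1, true); (11, 23, true); (11, 2, true); (14, 2, true); (12, 29, false); (0, 16, false); (25, 16, true); (1, 12, false); (24, 12, true); (5, 16, true); (20, 16, false); (6, 20, true); (19, 20, false); (7, 3, false); (16, 3, false); (4, 12, true); (17, 12, false); (2, 24, false); (18, 24, false); (4, 32, false); (15, 32, true); (3, 12, false); (18, 12, true); (7, 1, false); (12, 1, false); (6, 2, false); (9, 2, false); (5, 20, false); (8, 20, true); (4, 16, false); (9, 16, true)]; [:: (8, 0, true); (9, 15, true); (0, 20, false); (17, 20, true); (1, 32, false); (14, 32, true); (4, 20, false); (13, 20, true); (5, 24, true); (11, 24, true); (7, 0, false); (8, 0, false)]; [:: (8, 1, true); (9, 2, true); (10, 1, true); (11, 34, false); (0, 28, false); (20, 28, false); (2, 20, true); (19, 20, false); (3, 28, true); (17, 28, true); (7, 1, false); (12, 1, false); (5, 12, true); (12, 12, false); (6, 2, false); (9, 2, false)]; [:: (0, 3, false); (13, 3, false)]];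
  [:: [:: (7, 3, true); (10, 3, true); (8, 29, true); (9, 1, true); (10, 23, true); (10, 2, true); (13, 2, true); (11, 29, false); (0, 12, false); (23, 12, true); (4, 16, true); (19, 16, false); (5, 20, true); (18, 20, false); (6, 3, false); (15, 3, false); (3, 12, true); (16, 12, false); (1, 24, false); (17, 24, false); (3, 32, false); (14, 32, true); (2, 12, false); (17, 12, true); (6, 1, false); (11, 1, false); (5, 2, false); (8, 2, false); (4, 20, false); (7, 20, true); (3, 16, false); (8, 16, true)]; [:: (7, 0, true); (8, 15, true); (0, 32, false); (13, 32, true); (3, 20, false); (12, 20, true); (4, 24, true); (10, 24, true); (6, 0, false); (7, 0, false)]; [:: (0, 2, false); (11, 2, false)]; [::]];
  [:: [:: (6, 3, true); (9, 3, true); (7, 29, true); (8, 1, true); (9, 23, true); (9, 2, true); (12, 2, true); (10, 29, false); (3, 16, true); (18, 16, false); (4, 20, true); (17, 20, false); (5, 3, false); (14, 3, false); (2, 12, true); (15, 12, false); (0, 24, false); (16, 24, false); (2, 32, false); (13, 32, true); (1, 12, false); (16, 12, true); (5, 1, false); (10, 1, false); (4, 2, false); (7, 2, false); (3, 20, false); (6, 20, true); (2, 16, false); (7, 16, true)]; [:: (0, 1, false); (9, 1, false)]; [::]; [:: (6, 1, true); (7, 2, true); (8, 1, true); (9, 34, false); (0, 20, true); (17, 20, false); (1, 28, true); (15, 28, true); (5, 1, false); (10, 1, false); (3, 12, true); (10, 12, false); (4, 2, false); (7, 2, false)]]].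

Definition act (k : nat) (x : qv) : qv :=
  let: (a, b, c, e) := x in
  match k with
  | 1%N => let s := (a - b - c - e) / 2 in (a - s, b + s, c + s, e + s)
  | 2%N => (a, - b, c, e)
  | 3%N => (a, c, b, e)
  | 4%N => (a, b, e, c)
  | _ => x
  end.

Definition cb (i : nat) : qv :=
  match i with
  | 1%N => (1/2, -(1/2), -(1/2), -(1/2))
  | 2%N => (0, 1, 0, 0)
  | 3%N => (0, -1, 1, 0)
  | 4%N => (0, 0, -1, 1)
  | _ => (0, 0, 0, 0)
  end.

Definition Tw (x : qv) : seq nat := (nth ([::], 0%N) tab (index x roots)).1.
Definition Ic (x : qv) : nat := (nth ([::], 0%N) tab (index x roots)).2.
Definition cert_of (x : qv) (k : nat) := nth [::] (nth [::] certs (index x roots)) k.-1.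

Definition apply_step (w : seq nat) (st : nat * nat * bool) : option (seq nat) :=
  let: (p, n, dr) := st in
  let: (l0, r0) := nth ([::], [::]) rules n in
  let: (l, rr) := if dr then (r0, l0) else (l0, r0) in
  if take (size l) (drop p w) == l then Some (take p w ++ rr ++ drop (p + size l) w)
  else None.

Fixpoint run (w : seq nat) (sts : seq (nat * nat * bool)) : option (seq nat) :=
  match sts with
  | [::] => Some w
  | s :: t => match apply_step w s with Some w' => run w' t | None => None end
  end.

Definition Ew (x : qv) : seq nat := Tw x ++ (Ic x + 4)%N :: rev (Tw x).
Definition lhsw (x : qv) (k : nat) : seq nat := k :: (Ew x ++ [:: k]).

Definition check_all : bool :=
  all (fun x => all (fun k => (act k x \in roots) &&
     (run (lhsw x k) (cert_of x k) == Some (Ew (act k x)))) [:: 1; 2; 3; 4]%N) roots.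

Lemma check_ok : check_all.
Proof. vm_compute. reflexivity. Qed.

Lemma base_ok : all (fun i => (cb i \in roots) && (Tw (cb i) == [::]) && (Ic (cb i) == i))
   [:: 1; 2; 3; 4]%N.
Proof. vm_compute. reflexivity. Qed.

Global Opaque Tw Ic act.

Section Alg.
Variables (R : pzRingType) (d : R) (r e : nat -> R).

Definition letter (x : nat) : R :=
  match x with
  | 1%N => r 1 | 2%N => r 2 | 3%N => r 3 | 4%N => r 4
  | 5%N => e 1 | 6%N => e 2 | 7%N => e 3 | 8%N => e 4
  | _ => 1 end.

Definition ev (w : seq nat) : R := \prod_(x <- w) letter x.

Lemma ev_cat s t : ev (s ++ t) = ev s * ev t.
Proof. by rewrite /ev big_cat. Qed.

Lemma ev_cons x s : ev (x :: s) = letter x * ev s.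
Proof. by rewrite /ev big_cons. Qed.

Lemma ev_nil : ev [::] = 1.
Proof. by rewrite /ev big_nil. Qed.

Hypothesis H : BrF4_rel d r e.

Lemma rules_ok n : ev (nth ([::], [::]) rules n).1 = ev (nth ([::], [::]) rules n).2.
Proof.
have Hrs := r_sq H; have Hl := re_l H; have Hr := re_r H.
have Hc := comm_rel H; have Hb := braid_rel H.
case: (ltnP n 36) => Hn; last by rewrite nth_default.
do 36 try (case: n Hn => [|n] Hn); try by [].
all: rewrite /= ?ev_cons ?ev_nil /= ?mulr1 ?mulrA.
all: try by rewrite ?Hrs ?Hl ?Hr.
all: try by match goal with
  | |- r ?i * r ?j = _ => case: (Hc i j isT)
  | |- e ?i * r ?j = _ => case: (Hc i j isT) end.
all: try by match goal with
  | |- r ?i * _ * r ?i = r ?j * _ * _ => case: (Hb i j isT) end.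
- exact: (rel23_1 H).
- exact: (rel23_2 H).
- by rewrite (rel23_4 H) !mulrA.
- exact: (rel23_7 H).
Qed.

Lemma apply_step_ok w st w' : apply_step w st = Some w' -> ev w = ev w'.
Proof.
case: st => [[p n] dr] /=.
have Hn := rules_ok n.
case: (nth _ rules n) Hn => l0 r0 /= Hn.
case: dr => /=.
- case: ifP => // /eqP Ht [<-].
  rewrite -{1}(cat_take_drop p w) -{1}(cat_take_drop (size r0) (drop p w)) Ht.
  by rewrite !ev_cat drop_drop addnC Hn.
- case: ifP => // /eqP Ht [<-].
  rewrite -{1}(cat_take_drop p w) -{1}(cat_take_drop (size l0) (drop p w)) Ht.
  by rewrite !ev_cat drop_drop addnC Hn.
Qed.

Lemma run_ok sts w w' : run w sts = Some w' -> ev w = ev w'.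
Proof.
elim: sts w => [|s t IH] w /=; first by case=> ->.
case E: (apply_step w s) => [w1|] // /IH <-.
exact: apply_step_ok E.
Qed.

Definition EE (x : qv) : R := ev (Ew x).

Lemma key x k : x \in roots -> (k \in [:: 1; 2; 3; 4]%N) ->
  r k * EE x * r k = EE (act k x) /\ act k x \in roots.
Proof.
move=> Hx Hk.
have /allP /(_ x Hx) /allP /(_ k Hk) /andP [Hin /eqP Hrun] := check_ok.
split; last exact: Hin.
have E1 : ev (lhsw x k) = letter k * EE x * letter k.
  by rewrite /lhsw /EE ev_cons ev_cat ev_cons ev_nil mulr1 mulrA.
have E2 := run_ok _ _ _ Hrun.
rewrite /EE -E2 E1.
by move: Hk; rewrite !inE => /or4P [] /eqP ->.
Qed.

Lemma letter_r k : (0 < k <= 4)%N -> letter k = r k.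
Proof. by case: k => [|[|[|[|[|k]]]]]. Qed.

Lemma ev_wimg u : valid_word u -> ev u = wimg r u.
Proof.
move=> Hu; rewrite /ev /wimg; apply: eq_big_seq => k Hk.
by apply: letter_r; move/allP: Hu; apply.
Qed.

Lemma main_ind u x : valid_word u -> x \in roots ->
  ev u * EE x * ev (rev u) = EE (foldr act x u) /\ foldr act x u \in roots.
Proof.
elim: u => [|k u IH] /=; first by move=> _ Hx; rewrite ev_nil mulr1 mul1r.
move=> /andP [Hk Hu] Hx.
have [IH1 IH2] := IH Hu Hx.
have Hk' : k \in [:: 1; 2; 3; 4]%N.
  by move: Hk; case: k => [|[|[|[|[|k]]]]].
have [K1 K2] := key _ _ IH2 Hk'.
split; last exact: K2.
rewrite ev_cons rev_cons -cats1 ev_cat ev_cons ev_nil mulr1 letter_r //.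
by rewrite -K1 -IH1 !mulrA.
Qed.

End Alg.

Definition tv (x : qv) : vec := let: (a, b, c, e) := x in mkvec a b c e.

Lemma beta_tv i : beta i = tv (cb i) \/ ~~ (0 < i <= 4)%N.
Proof. by case: i => [|[|[|[|[|i]]]]]; [right|left|left|left|left|right]. Qed.

Lemma mkvecE a b c e (m : 'I_4) :
  mkvec a b c e 0 m = nth 0 [:: a; b; c; e] m.
Proof. by rewrite /mkvec mxE. Qed.

Lemma dotE a b c e a' b' c' e' :
  dot (mkvec a b c e) (mkvec a' b' c' e') = a * a' + b * b' + c * c' + e * e'.
Proof.
rewrite /dot !mxE !big_ord_recr big_ord0 /= !mxE /=.
by rewrite add0r.
Qed.

Lemma tv_inj x y : tv x = tv y -> x = y.
Proof.
case: x => [[[a b] c] e]; case: y => [[[a' b'] c'] e'] /= Hv.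
have h (m : 'I_4) := congr1 (fun v : vec => v 0 m) Hv.
move: (h 0%R) (h 1%R) (h 2%R) (h 3%R); rewrite !mkvecE /=.
by move=> -> -> -> ->.
Qed.

Transparent act.
Lemma refl_tv k x : (0 < k <= 4)%N -> refl (beta k) (tv x) = tv (act k x).
Proof.
case: x => [[[a b] c] e].
case: k => [|[|[|[|[|k]]]]] // _; rewrite /refl /= !dotE;
  apply/rowP => m; rewrite !mxE;
  case: m => [[|[|[|[|m]]]] Hm] //=; field => //.
Qed.

Lemma wact_tv u x : valid_word u -> wact u (tv x) = tv (foldr act x u).
Proof.
elim: u => [|k u IH] //= /andP [Hk Hu].
by rewrite IH // refl_tv.
Qed.

Theorem lemma3p3 (R : pzRingType) (d : R) (r e : nat -> R)
    (i j : nat) (u : seq nat) :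
  BrF4_rel d r e ->
  (0 < i <= 4)%N -> (0 < j <= 4)%N ->
  valid_word u ->
  wact u (beta i) = beta j ->
  wimg r u * e i * wimg r (rev u) = e j.
Proof.
move=> H Hi Hj Hu Hw.
have Hbase (k : nat) : (0 < k <= 4)%N ->
    [/\ beta k = tv (cb k), cb k \in roots & @EE R r e (cb k) = e k].
  move=> Hk.
  have Hk' : k \in [:: 1; 2; 3; 4]%N by move: Hk; case: k => [|[|[|[|[|k]]]]].
  have /allP /(_ k Hk') /andP [/andP [Hin /eqP HT] /eqP HI] := base_ok.
  split=> //; first by move: Hk; case: k {Hk' HT HI Hin} => [|[|[|[|[|k]]]]].
  rewrite /EE /Ew HT HI /= ev_cons ev_nil mulr1.
  by move: Hk; case: k {Hk' HT HI Hin} => [|[|[|[|[|k]]]]].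
have [Bi Ri Ei] := Hbase i Hi.
have [Bj Rj Ej] := Hbase j Hj.
rewrite Bi Bj wact_tv // in Hw.
have Heq := tv_inj _ _ Hw.
have [M _] := @main_ind _ _ _ _ H u (cb i) Hu Ri.
have Hru : valid_word (rev u) by rewrite /valid_word all_rev.
rewrite -(@ev_wimg _ r e u Hu) -(@ev_wimg _ r e (rev u) Hru).
by rewrite -Ei M Heq Ej.
Qed.
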